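(* Let $H$ be a connected graph with $k=|V(H)|>1$ vertices that does not contain two true twins. Then no deterministic online algorithm (without advice) solving the Delayed Connected $H$-Node-Deletion Problem has competitive ratio smaller than $k$.
   Context: All graphs are finite, simple and undirected. Two distinct vertices are true twins if they have the same closed neighborhood $N[v]=N(v)\cup\{v\}$ (in particular they are adjacent). An induced copy of $H$ in $G$ is an induced subgraph isomorphic to $H$; $G$ is $H$-free if it has none. An online graph $G$ has vertices $v_1,\dots,v_n$ revealed one at a time (with edges to earlier vertices); $G_t=G[\{v_1,\dots,v_t\}]$. Delayed Connected $H$-Node-Deletion Problem (for a fixed connected $H$): an online algorithm must choose sets $S_1\subseteq\dots\subseteq S_n$ with $S_t\subseteq V(G_t)$ and $G_t-S_t$ $H$-free for each $t$, where $S_t$ depends only on $G_t$; the cost is $|S_n|$. $\mathrm{OPT}(G)$ is the minimum size of $S\subseteq V(G)$ with $G-S$ $H$-free. An algorithm is $c$-competitive if there is a constant $\alpha\ge0$ with cost $\le c\cdot \mathrm{OPT}(G)+\alpha$ for every online graph $G$; its competitive ratio is the infimum of such $c\ge1$. *)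

(* Defs.v *)
From HB Require Import structures.
From mathcomp Require Import all_boot all_order all_algebra.
From mathcomp Require Import reals.
Set Implicit Arguments. Unset Strict Implicit. Unset Printing Implicit Defensive.
Import Order.TTheory GRing.Theory Num.Theory.

Definition true_twins (V : finType) (hE : rel V) (u v : V) : Prop :=
  u != v /\ forall w : V, ((w == u) || hE u w) = ((w == v) || hE v w).

Definition no_true_twins (V : finType) (hE : rel V) : Prop :=
  forall u v : V, ~ true_twins hE u v.

Definition connected_graph (V : finType) (hE : rel V) : Prop :=
  forall u v : V, connect hE u v.

(* An online graph with n vertices v_0,...,v_{n-1} is a sequence g of length
   n; the i-th entry lists, for each earlier vertex j < i, whether v_i is
   adjacent to v_j (entries at positions >= i are ignored).  The revealed
   graph G_t is the prefix [take t g]. *)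
Definition ograph := seq (seq bool).

Definition oadj (g : ograph) (i j : nat) : bool :=
  if j < i then nth false (nth [::] g i) j
  else if i < j then nth false (nth [::] g j) i
  else false.

Definition alive (g : ograph) (S : seq nat) : pred nat :=
  fun x => (x < size g) && (x \notin S).

Definition Hfree (V : finType) (hE : rel V) (g : ograph) (keep : pred nat)
  : Prop :=
  ~ exists f : V -> nat,
      [/\ injective f, forall v, keep (f v) &
          forall u v, u != v -> hE u v = oadj g (f u) (f v)].

Definition solution (V : finType) (hE : rel V) (g : ograph) (S : seq nat)
  : Prop :=
  [/\ uniq S, {in S, forall x, x < size g} & Hfree hE g (alive g S)].

Definition isOPT (V : finType) (hE : rel V) (g : ograph) (m : nat) : Prop :=
  (exists S, solution hE g S /\ size S = m) /\
  (forall S, solution hE g S -> m <= size S).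

(* An algorithm maps the currently revealed graph G_t (a prefix) to the set
   S_t (as a sequence of vertex indices); thus S_t depends only on G_t. *)
Definition online_alg := ograph -> seq nat.

Definition valid_alg (V : finType) (hE : rel V) (A : online_alg) : Prop :=
  forall g : ograph,
    [/\ {in A g, forall x, x < size g},
        forall t, {subset A (take t g) <= A g} &
        Hfree hE g (alive g (A g))].

Definition alg_cost (A : online_alg) (g : ograph) : nat := size (undup (A g)).

Definition competitive (R : realType) (V : finType) (hE : rel V)
  (A : online_alg) (c : R) : Prop :=
  exists alpha : R, (0 <= alpha)%R /\
    forall (g : ograph) (m : nat), isOPT hE g m ->
      ((alg_cost A g)%:R <= c * m%:R + alpha)%R.

(* Main.v *)
Require Import Defs.
From HB Require Import structures.
From mathcomp Require Import all_boot all_order all_algebra.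
From mathcomp Require Import reals.
From mathcomp Require Import zify lra.
From Stdlib Require Import Classical.
Import Order.TTheory GRing.Theory Num.Theory.
Set Implicit Arguments. Unset Strict Implicit. Unset Printing Implicit Defensive.

Definition adjlab (V : finType) (hE : rel V) (x0 : V) (L : seq V) (i j : nat) : bool :=
  (nth x0 L i == nth x0 L j) || hE (nth x0 L i) (nth x0 L j).

Definition mkg (V : finType) (hE : rel V) (x0 : V) (L : seq V) : ograph :=
  mkseq (fun i => mkseq (fun j => adjlab hE x0 L i j) i) (size L).

Lemma size_mkg (V : finType) (hE : rel V) x0 L : size (mkg hE x0 L) = size L.
Proof. by rewrite /mkg size_mkseq. Qed.

Lemma oadj_mkg (V : finType) (hE : rel V) x0 L i j :
  symmetric hE -> (i < size L)%N -> (j < size L)%N ->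
  oadj (mkg hE x0 L) i j = (i != j) && adjlab hE x0 L i j.
Proof.
move=> hs hi hj; rewrite /oadj /mkg.
case: ltngtP => h.
- by rewrite nth_mkseq // nth_mkseq.
- rewrite nth_mkseq // nth_mkseq //= /adjlab eq_sym hs; by [].
- by [].
Qed.

Lemma take_mkg (V : finType) (hE : rel V) x0 L v :
  take (size L) (mkg hE x0 (rcons L v)) = mkg hE x0 L.
Proof.
apply: (@eq_from_nth _ [::]).
  by rewrite size_take !size_mkg size_rcons ltnSn.
move=> i; rewrite size_take !size_mkg size_rcons ltnSn => hi.
rewrite nth_take // /mkg !nth_mkseq ?size_rcons //; last by apply: ltnW.
apply: (@eq_from_nth _ false); rewrite ?size_mkseq // => j hj; rewrite !nth_mkseq //.
rewrite /adjlab !nth_rcons hi (ltn_trans hj hi) //.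
Qed.

Lemma witness (q : pred nat) N :
  ~~ all q (iota 0 N) -> (find (predC q) (iota 0 N) < N)%N /\ ~~ q (find (predC q) (iota 0 N)).
Proof.
rewrite -has_predC => h.
have hl : (find (predC q) (iota 0 N) < N)%N by rewrite -{2}(size_iota 0 N) -has_find.
split => //.
have := nth_find 0 h; by rewrite nth_iota.
Qed.

Definition fd (V : finType) (hE : rel V) (A : online_alg) (x0 : V) (L : seq V) (v : V) : bool :=
  all (fun i => (nth x0 L i != v) || (i \in A (mkg hE x0 L))) (iota 0 (size L)).

Lemma fd_exists (V : finType) (hE : rel V) (A : online_alg) x0 L :
  symmetric hE -> valid_alg hE A -> exists v, fd hE A x0 L v.
Proof.
move=> hs hA; case: (pickP (fd hE A x0 L)) => [v Hv|H0]; first by exists v.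
exfalso; have [_ _ HF] := hA (mkg hE x0 L); apply: HF.
set q := fun v i => (nth x0 L i != v) || (i \in A (mkg hE x0 L)).
have W : forall v, (find (predC (q v)) (iota 0 (size L)) < size L)%N /\
                  ~~ q v (find (predC (q v)) (iota 0 (size L))).
  by move=> v; apply: witness; rewrite -/(fd hE A x0 L v) H0.
exists (fun v => find (predC (q v)) (iota 0 (size L))).
have lab : forall v, nth x0 L (find (predC (q v)) (iota 0 (size L))) = v.
  by move=> v; have [_] := W v; rewrite /q negb_or negbK => /andP[/eqP].
split.
- by move=> u v e; rewrite -(lab u) -(lab v) e.
- move=> v; have [h1] := W v; rewrite /q negb_or negbK => /andP[_ h2].
  by rewrite /alive size_mkg h1 h2.
- move=> u v uv; have [hu _] := W u; have [hv _] := W v.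
  rewrite oadj_mkg // /adjlab !lab (negPf uv) /=.
  case: eqP => // e; by move: uv; rewrite -(lab u) -(lab v) e eqxx.
Qed.

Definition Inv (V : finType) (hE : rel V) (A : online_alg) (x0 : V) (L : seq V) : Prop :=
  forall i j, (i < size L)%N -> (j < size L)%N -> nth x0 L i = nth x0 L j ->
    i \notin A (mkg hE x0 L) -> j \notin A (mkg hE x0 L) -> i = j.

Lemma sub_step (V : finType) (hE : rel V) (A : online_alg) x0 L v :
  valid_alg hE A -> {subset A (mkg hE x0 L) <= A (mkg hE x0 (rcons L v))}.
Proof.
move=> hA; have [_ h _] := hA (mkg hE x0 (rcons L v)).
by have := h (size L); rewrite take_mkg.
Qed.

Lemma Inv_step (V : finType) (hE : rel V) (A : online_alg) x0 L v :
  valid_alg hE A -> fd hE A x0 L v -> Inv hE A x0 L -> Inv hE A x0 (rcons L v).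
Proof.
move=> hA hfd hI.
have sub := @sub_step _ _ _ x0 L v hA.
have key : forall j, (j < size L)%N -> nth x0 L j = v -> j \in A (mkg hE x0 L).
  move=> j hj e; move/allP: hfd => /(_ j); rewrite mem_iota add0n hj e eqxx /=.
  by move=> ->.
move=> i j; rewrite size_rcons !ltnS !nth_rcons => hi hj.
case: (ltnP i (size L)) => hi'; case: (ltnP j (size L)) => hj'.
- move=> e ni nj; apply: hI => //.
  + by apply: contra ni; apply: sub.
  + by apply: contra nj; apply: sub.
- have -> : j = size L by apply/eqP; rewrite eqn_leq hj hj'.
  rewrite eqxx => e ni _; exfalso.
  by move: ni; rewrite (sub _ (key i hi' e)).
- have -> : i = size L by apply/eqP; rewrite eqn_leq hi hi'.
  rewrite eqxx => e _ nj; exfalso.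
  by move: nj; rewrite (sub _ (key j hj' (esym e))).
- by move=> _ _ _; apply/eqP; rewrite eqn_leq; apply/andP; split;
    [apply: leq_trans hj' | apply: leq_trans hi'].
Qed.

Lemma alive_count (V : finType) (hE : rel V) (A : online_alg) x0 L v :
  fd hE A x0 L v -> Inv hE A x0 L ->
  (count (fun i => i \notin A (mkg hE x0 L)) (iota 0 (size L)) <= #|V|.-1)%N.
Proof.
move=> hfd hI.
set s := filter (fun i => i \notin A (mkg hE x0 L)) (iota 0 (size L)).
rewrite -size_filter -/s -(size_map (nth x0 L)) -(cardC1 v).
rewrite cardE; apply: uniq_leq_size.
  rewrite map_inj_in_uniq; first by rewrite filter_uniq // iota_uniq.
  move=> i j; rewrite !mem_filter !mem_iota !add0n => /andP[ni hi] /andP[nj hj] e.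
  exact: hI.
move=> w /mapP [i]; rewrite mem_filter mem_iota add0n => /andP[ni hi] ->.
have := allP hfd i; rewrite mem_iota add0n hi /= (negPf ni) orbF.
by rewrite mem_enum inE; apply.
Qed.

Lemma cost_lb (V : finType) (hE : rel V) (A : online_alg) x0 L v :
  fd hE A x0 L v -> Inv hE A x0 L ->
  (size L - #|V|.-1 <= alg_cost A (mkg hE x0 L))%N.
Proof.
move=> hfd hI; have h := alive_count hfd hI.
have hc := count_predC (fun i => i \in A (mkg hE x0 L)) (iota 0 (size L)).
rewrite size_iota in hc.
have : (count (fun i => i \in A (mkg hE x0 L)) (iota 0 (size L)) <= alg_cost A (mkg hE x0 L))%N.
  rewrite -size_filter /alg_cost; apply: uniq_leq_size; first by rewrite filter_uniq // iota_uniq.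
  by move=> i; rewrite mem_filter mem_undup => /andP[].
have e : count (predC (fun i => i \in A (mkg hE x0 L))) (iota 0 (size L)) =
         count (fun i => i \notin A (mkg hE x0 L)) (iota 0 (size L)) by [].
lia.
Qed.

Definition Sc (V : finType) (x0 : V) (L : seq V) (u : V) : seq nat :=
  filter (fun i => nth x0 L i == u) (iota 0 (size L)).

Lemma size_Sc (V : finType) (x0 : V) L u : size (Sc x0 L u) = count_mem u L.
Proof.
rewrite /Sc size_filter -{3}(mkseq_nth x0 L) /mkseq count_map.
by apply: eq_count => i.
Qed.

Lemma sol_Sc (V : finType) (hE : rel V) x0 L u :
  symmetric hE -> no_true_twins hE -> solution hE (mkg hE x0 L) (Sc x0 L u).
Proof.
move=> hs hTT; split.
- by rewrite filter_uniq // iota_uniq.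
- by move=> i; rewrite mem_filter mem_iota add0n size_mkg => /andP[].
move=> [f [finj fal fadj]].
have fa : forall w, (f w < size L)%N /\ nth x0 L (f w) != u.
  move=> w; move: (fal w); rewrite /alive size_mkg /Sc mem_filter mem_iota add0n.
  by case/andP=> -> /=; rewrite andbT.
have adjw : forall a w, a != w -> hE a w = adjlab hE x0 L (f a) (f w).
  move=> a w aw; have [ha _] := fa a; have [hw _] := fa w.
  rewrite fadj // oadj_mkg //.
  have -> : (f a != f w) by apply: contra aw => /eqP /finj ->.
  by [].
set phi := fun w => nth x0 L (f w).
have phinj : injective phi.
  move=> a b e; apply/eqP; apply/negPn/negP => ab; apply: (hTT a b); split => // w.
  have ba : b != a by rewrite eq_sym.
  case: (eqVneq w a) => [->|wa].
    rewrite /= (negPf ab) /= (adjw b a ba).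
    by rewrite /adjlab -/(phi b) -/(phi a) e eqxx.
  case: (eqVneq w b) => [->|wb].
    rewrite /= (adjw a b ab).
    by rewrite /adjlab -/(phi b) -/(phi a) e eqxx.
  rewrite /= (adjw a w) 1?eq_sym // (adjw b w) 1?eq_sym //.
  by rewrite /adjlab -/(phi b) -/(phi a) e.
have := inj_card_onto phinj (leqnn _) u.
case/codomP => a ea.
by case: (fa a) => _; rewrite -/(phi a) -ea eqxx.
Qed.

Lemma opt_exists_aux (V : finType) (hE : rel V) g n : forall S,
  (size S <= n)%N -> solution hE g S -> exists m, isOPT hE g m /\ (m <= size S)%N.
Proof.
elim: n => [|n IH] S hS sol.
  exists (size S); split; last by [].
  split; first by exists S.
  by move=> S' _; move: hS; rewrite leqn0 => /eqP ->.
destruct (classic (exists S', solution hE g S' /\ (size S' < size S)%N)) as [[S' [sol' lt']]|N].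
  have [m [hm le]] := IH S' (leq_trans lt' hS) sol'.
  by exists m; split => //; apply: leq_trans le (ltnW lt').
exists (size S); split => //; split; first by exists S.
move=> S' sol'; rewrite leqNgt; apply/negP => lt'; apply: N; by exists S'.
Qed.

Lemma opt_exists (V : finType) (hE : rel V) g S :
  solution hE g S -> exists m, isOPT hE g m /\ (m <= size S)%N.
Proof. exact: opt_exists_aux (leqnn _). Qed.

Lemma sum_count_mem (V : finType) (L : seq V) : (\sum_(u : V) count_mem u L)%N = size L.
Proof.
elim: L => [|x L IH] /=; first by rewrite big1.
rewrite big_split /= IH (bigD1 x) //= eqxx big1 // => u ux.
by rewrite eq_sym (negPf ux).
Qed.

Fixpoint Ls (V : finType) (hE : rel V) (A : online_alg) (x0 : V) (n : nat) : seq V :=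
  match n with
  | 0 => enum V
  | n'.+1 => let L := Ls hE A x0 n' in rcons L (odflt x0 [pick v | fd hE A x0 L v])
  end.

Lemma Ls_props (V : finType) (hE : rel V) (A : online_alg) (x0 : V) :
  symmetric hE -> valid_alg hE A -> forall n,
  [/\ size (Ls hE A x0 n) = (#|V| + n)%N, Inv hE A x0 (Ls hE A x0 n) &
      fd hE A x0 (Ls hE A x0 n) (odflt x0 [pick v | fd hE A x0 (Ls hE A x0 n) v])].
Proof.
move=> hs hA.
have hfd : forall L, fd hE A x0 L (odflt x0 [pick v | fd hE A x0 L v]).
  move=> L; case: pickP => [v hv //|H0].
  by have [v hv] := fd_exists x0 L hs hA; move: (H0 v); rewrite hv.
elim=> [|n [IHs IHi IHf]].
  split; [by rewrite addn0 -cardE | | exact: hfd].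
  move=> i j hi hj e _ _; apply/eqP.
  by rewrite -(nth_uniq x0 hi hj (enum_uniq _)) e.
split; [by rewrite /= size_rcons IHs addnS | | exact: hfd].
exact: Inv_step.
Qed.

Local Open Scope ring_scope.

Theorem mainTheorem5 (R : realType) (V : finType) (hE : rel V) :
  symmetric hE -> irreflexive hE -> connected_graph hE ->
  (1 < #|V|)%N -> no_true_twins hE ->
  forall A : online_alg, valid_alg hE A ->
  forall c : R, 1 <= c -> c < (#|V|)%:R -> ~ competitive hE A c.
Proof.
move=> hs _ _ hk hTT A hA c hc1 hck [alpha [ha Hb]].
have [x0 _] : exists x : V, true.
  move: hk; rewrite cardE; case: (enum _) => [|x s] //; by exists x.
set k := #|V| in hk hck *.
have kc : 0 < k%:R - c by rewrite subr_gt0.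
set X := (c * k%:R + k%:R * alpha) / (k%:R - c).
set n := (Num.truncn X).+1.
have F4 : c * k%:R + k%:R * alpha < (k%:R - c) * n%:R.
  have hx : X < n%:R by apply: truncnS_gt.
  have := hx; rewrite -(ltr_pM2l kc) /X mulrC divfK //; last by rewrite gt_eqF.
have [Hsz HI Hfd] := Ls_props x0 hs hA n.
set L := Ls hE A x0 n in Hsz HI Hfd.
have Hcost := cost_lb Hfd HI.
rewrite Hsz in Hcost.
case: (@arg_minnP V x0 predT (fun u => count_mem u L)) => // u _ hmin.
have F3 : (k * count_mem u L <= k + n)%N.
  rewrite -Hsz -(sum_count_mem L).
  have := @leq_sum V (index_enum V) predT (fun _ => count_mem u L) (fun j => count_mem j L) (fun j _ => hmin j isT).
  by rewrite sum_nat_const.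
have [m [hm hmS]] := opt_exists (sol_Sc x0 L u hs hTT).
rewrite size_Sc in hmS.
have Hm := Hb _ _ hm.
have F1 : (n + 1)%:R <= (alg_cost A (mkg hE x0 L))%:R :> R.
  by rewrite ler_nat; lia.
have F2 : m%:R <= (count_mem u L)%:R :> R by rewrite ler_nat.
have F3' : k%:R * (count_mem u L)%:R <= k%:R + n%:R :> R.
  by rewrite -natrM -natrD ler_nat.
have c0 : 0 <= c by apply: le_trans hc1.
have k0 : 0 <= k%:R :> R by [].
have P1 : k%:R * (n + 1)%:R <= k%:R * (c * m%:R + alpha).
  by rewrite ler_wpM2l //; apply: le_trans Hm.
have P2 : k%:R * (c * m%:R) <= k%:R * (c * (count_mem u L)%:R).
  by rewrite ler_wpM2l // ler_wpM2l.
have P3 : c * (k%:R * (count_mem u L)%:R) <= c * (k%:R + n%:R).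
  by rewrite ler_wpM2l.
rewrite natrD in P1.
clear -P1 P2 P3 F4 k0 ha.
lra.
Qed.
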